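(* Let $\mathcal{C}\subseteq\mathbb{F}^n$ be an $\mathbb{F}$-linear code and $\mathcal{L}=(\mathcal{L}_1,\dots,\mathcal{L}_\ell)\in\mathcal{P}(\mathbf{K}^{\mathbf{n}})$. Then for $\mathbf{c}\in\mathcal{C}^\perp$, we have $\mathbf{c}\in\mathcal{C}(\mathcal{L})$ if and only if $\mathbf{c}\cdot\mathbf{y}=0$ for all $\mathbf{y}=(\mathbf{y}^{(1)},\dots,\mathbf{y}^{(\ell)})$ with $\mathbf{y}^{(i)}\in\mathcal{L}_i$ for all $i$ (viewed as a vector in $\mathbb{F}^n$). Furthermore, $\mathcal{C}(\mathcal{L})$ is an $\mathbb{F}$-linear subspace of $\mathcal{C}^\perp$.
   Context: Setting: $\ell,n_1,\dots,n_\ell$ positive integers, $K_1,\dots,K_\ell$ finite fields with a common finite extension $\mathbb{F}$, $m_i=[\mathbb{F}:K_i]$, $n=\sum n_i$. $\mathcal{P}(\mathbf{K}^{\mathbf{n}})=\mathcal{P}(K_1^{n_1})\times\cdots\times\mathcal{P}(K_\ell^{n_\ell})$, where $\mathcal{P}(K_i^{n_i})$ is the lattice of $K_i$-subspaces of $K_i^{n_i}$; inclusion and orthogonal complements (w.r.t. the standard bilinear form on $K_i^{n_i}$) are componentwise. For $\mathbf{c}=(\mathbf{c}^{(1)},\dots,\mathbf{c}^{(\ell)})\in\mathbb{F}^n$ with $\mathbf{c}^{(i)}\in\mathbb{F}^{n_i}$, fix an ordered basis of $\mathbb{F}/K_i$ and let $\Gamma_i(\mathbf{c}^{(i)})$ be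 the $m_i\times n_i$ matrix over $K_i$ whose $j$-th column is the coordinate vector of the $j$-th entry of $\mathbf{c}^{(i)}$; the sum-rank support of $\mathbf{c}$ is $\mathrm{supp}(\mathbf{c})=(E_1,\dots,E_\ell)\in\mathcal{P}(\mathbf{K}^{\mathbf{n}})$ with $E_i$ the $K_i$-row space of $\Gamma_i(\mathbf{c}^{(i)})$. $\mathcal{C}^\perp$ is the orthogonal complement of $\mathcal{C}$ in $\mathbb{F}^n$ w.r.t. the standard bilinear form, and $\mathcal{C}(\mathcal{L})=\{\mathbf{c}\in\mathcal{C}^\perp:\mathrm{supp}(\mathbf{c})\subseteq\mathcal{L}^\perp\}$. *)

(* Defs.v *)
From HB Require Import structures.
From mathcomp Require Import all_boot all_order all_algebra.
Set Implicit Arguments. Unset Strict Implicit. Unset Printing Implicit Defensive.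
Import GRing.Theory.
Local Open Scope ring_scope.

Definition dotv (R : pzRingType) (N : nat) (u v : 'rV[R]_N) : R :=
  \sum_(j < N) u 0 j * v 0 j.

(* Subspaces of K^n are represented (mxalgebra style) as row spaces of square
   matrices.  The orthogonal complement of the row space of A w.r.t. the
   standard bilinear form is the row space of kermx A^T
   (u *m A^T = 0 iff u is orthogonal to every row of A). *)
Definition orthmx (K : fieldType) (n : nat) (A : 'M[K]_n) : 'M[K]_n := kermx A^T.

Definition is_basis (K F : fieldType) (phi : {rmorphism K -> F}) (m : nat)
  (b : 'rV[F]_m) : Prop :=
  forall x : F, exists! a : 'rV[K]_m, x = \sum_(k < m) phi (a 0 k) * b 0 k.

Definition coordv (K : finFieldType) (F : fieldType) (phi : {rmorphism K -> F})
  (m : nat) (b : 'rV[F]_m) (x : F) : 'rV[K]_m :=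
  odflt 0 [pick a : 'rV[K]_m | x == \sum_(k < m) phi (a 0 k) * b 0 k].

Definition Gammamx (K : finFieldType) (F : fieldType) (phi : {rmorphism K -> F})
  (m n : nat) (b : 'rV[F]_m) (c : 'rV[F]_n) : 'M[K]_(m, n) :=
  \matrix_(k < m, j < n) coordv phi b (c 0 j) 0 k.

(* Sum-rank support of c in F^(sum n_i): the i-th component is the row space
   of Gamma_i(c^(i)), with c^(i) the i-th block (submxrow). *)
Definition supp_i (l : nat) (K : 'I_l -> finFieldType) (F : fieldType)
  (phi : forall i, {rmorphism K i -> F}) (m n : 'I_l -> nat)
  (b : forall i, 'rV[F]_(m i)) (c : 'rV[F]_(\sum_(i < l) n i)) (i : 'I_l)
  : 'M[K i]_(m i, n i) :=
  Gammamx (phi i) (b i) (submxrow c i).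

Definition dualcode (F : fieldType) (N : nat) (C : 'M[F]_N) : 'M[F]_N := kermx C^T.

Definition CodeL (l : nat) (K : 'I_l -> finFieldType) (F : fieldType)
  (phi : forall i, {rmorphism K i -> F}) (m n : 'I_l -> nat)
  (b : forall i, 'rV[F]_(m i)) (C : 'M[F]_(\sum_(i < l) n i))
  (L : forall i, 'M[K i]_(n i)) (c : 'rV[F]_(\sum_(i < l) n i)) : Prop :=
  (c <= dualcode C)%MS /\
  forall i : 'I_l, (supp_i phi b c i <= orthmx (L i))%MS.

Definition embedv (l : nat) (K : 'I_l -> finFieldType) (F : fieldType)
  (phi : forall i, {rmorphism K i -> F}) (n : 'I_l -> nat)
  (y : forall i, 'rV[K i]_(n i)) : 'rV[F]_(\sum_(i < l) n i) :=
  \mxrow_(i < l) map_mx (phi i) (y i).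

(* Main.v *)
Require Import Defs.
From HB Require Import structures.
From mathcomp Require Import all_boot all_order all_algebra.
Import GRing.Theory.
Local Open Scope ring_scope.

Set Implicit Arguments. Unset Strict Implicit.

Lemma coordvE (K : finFieldType) (F : fieldType) (phi : {rmorphism K -> F})
  (m : nat) (b : 'rV[F]_m) (hb : is_basis phi b) (x : F) :
  x = \sum_(k < m) phi (coordv phi b x 0 k) * b 0 k.
Proof.
rewrite /coordv; case: pickP => [a /eqP //| H].
have [a [Ha _]] := hb x; by have := H a; rewrite -Ha eqxx.
Qed.

Lemma basis_inj (K : finFieldType) (F : fieldType) (phi : {rmorphism K -> F})
  (m : nat) (b : 'rV[F]_m) (hb : is_basis phi b) (a : 'rV[K]_m) :
  \sum_(k < m) phi (a 0 k) * b 0 k = 0 -> a = 0.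
Proof.
move=> Ha.
have [a0 [_ U]] := hb 0.
rewrite -(U a (esym Ha)); apply: U.
rewrite big1 // => k _; by rewrite mxE rmorph0 mul0r.
Qed.

Lemma dot_block (K : finFieldType) (F : fieldType) (phi : {rmorphism K -> F})
  (m n : nat) (b : 'rV[F]_m) (hb : is_basis phi b) (c : 'rV[F]_n) (y : 'rV[K]_n) :
  dotv c (map_mx phi y) =
  \sum_(k < m) phi ((Gammamx phi b c *m y^T) k 0) * b 0 k.
Proof.
rewrite /dotv.
under eq_bigr => j _ do rewrite {1}(coordvE hb (c 0 j)) mulr_suml.
rewrite exchange_big /=; apply: eq_bigr => k _.
rewrite !mxE rmorph_sum mulr_suml; apply: eq_bigr => j _.
by rewrite !mxE rmorphM /= mulrAC.
Qed.

Lemma dot_sum (l : nat) (n : 'I_l -> nat) (F : fieldType)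
  (c : 'rV[F]_(\sum_(i < l) n i)) (w : forall i, 'rV[F]_(n i)) :
  dotv c (\mxrow_(i < l) w i) = \sum_(i < l) dotv (submxrow c i) (w i).
Proof.
have E : forall N (u v : 'rV[F]_N), dotv u v = (u *m v^T) 0 0.
  by move=> N u v; rewrite /dotv mxE; apply: eq_bigr => j _; rewrite mxE.
rewrite E -{1}(submxrowK c) tr_mxrow mul_mxrow_mxcol summxE.
by apply: eq_bigr => i _; rewrite E.
Qed.

Lemma dotv0r (F : fieldType) N (u : 'rV[F]_N) : dotv u 0 = 0.
Proof. by rewrite /dotv big1 // => j _; rewrite mxE mulr0. Qed.

Lemma dotv0l (F : fieldType) N (u : 'rV[F]_N) : dotv 0 u = 0.
Proof. by rewrite /dotv big1 // => j _; rewrite mxE mul0r. Qed.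

Lemma dotvD (F : fieldType) N (a : F) (u v w : 'rV[F]_N) :
  dotv (a *: u + v) w = a * dotv u w + dotv v w.
Proof.
rewrite /dotv mulr_sumr -big_split; apply: eq_bigr => j _.
by rewrite !mxE mulrDl mulrA.
Qed.

Theorem mainTheorem3 (l : nat) (n m : 'I_l -> nat)
  (F : finFieldType) (K : 'I_l -> finFieldType)
  (phi : forall i, {rmorphism K i -> F})
  (b : forall i, 'rV[F]_(m i))
  (hl : (0 < l)%N) (hn : forall i, (0 < n i)%N)
  (hb : forall i, is_basis (phi i) (b i))
  (C : 'M[F]_(\sum_(i < l) n i)) (L : forall i, 'M[K i]_(n i)) :
  (forall c : 'rV[F]_(\sum_(i < l) n i), (c <= dualcode C)%MS ->
     (CodeL phi b C L c <->
      forall y : forall i, 'rV[K i]_(n i),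
        (forall i, (y i <= L i)%MS) -> dotv c (embedv phi y) = 0))
  /\
  ((forall c, CodeL phi b C L c -> (c <= dualcode C)%MS) /\
   CodeL phi b C L 0 /\
   (forall (a : F) (u v : 'rV[F]_(\sum_(i < l) n i)),
      CodeL phi b C L u -> CodeL phi b C L v -> CodeL phi b C L (a *: u + v))).
Proof.
have P1 : forall c : 'rV[F]_(\sum_(i < l) n i), (c <= dualcode C)%MS ->
     (CodeL phi b C L c <->
      forall y : forall i, 'rV[K i]_(n i),
        (forall i, (y i <= L i)%MS) -> dotv c (embedv phi y) = 0).
  move=> c Hc; split.
  - move=> [_ H] y Hy; rewrite /embedv dot_sum big1 // => i _.
    rewrite (dot_block (hb i)).
    have [D ->] := submxP (Hy i).
    have /sub_kermxP H0 := H i; rewrite /supp_i /orthmx in H0.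
    rewrite trmx_mul mulmxA H0 mul0mx.
    by rewrite big1 // => k _; rewrite mxE rmorph0 mul0r.
  - move=> H; split => // i; rewrite /supp_i /orthmx; apply/sub_kermxP.
    apply/matrixP => k r.
    pose y := fun j => if j == i then \sum_(t < n j | val t == val r) row t (L j) else 0.
    have Hy : forall j, (y j <= L j)%MS.
      move=> j; rewrite /y; case: eqP => _; last exact: sub0mx.
      by apply: summx_sub => t _; exact: row_sub.
    have := H y Hy; rewrite /embedv dot_sum (bigD1 i) //= big1; last first.
      move=> j /negbTE Hj; by rewrite /y Hj map_mx0 dotv0r.
    rewrite addr0 /y eqxx.
    have -> : \sum_(t < n i | val t == val r) row t (L i) = row r (L i).
      exact: (big_pred1_eq _ r).
    rewrite (dot_block (hb i)) => E.
    set G := Gammamx _ _ _ *m _ in E.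
    have E' : \sum_(k0 < m i) phi i (G^T 0 k0) * b i 0 k0 = 0.
      by rewrite -[RHS]E; apply: eq_bigr => k0 _; rewrite mxE.
    have {}E := basis_inj (hb i) E'.
    have Gk : G k 0 = 0.
      by have := congr1 (fun M : 'M[K i]_(1, m i) => M 0 k) E; rewrite !mxE.
    by rewrite [RHS]mxE -Gk /G tr_row colE mulmxA -colE !mxE.
split => //.
have Hd : forall c, CodeL phi b C L c -> (c <= dualcode C)%MS by move=> c [].
split => //; split.
  apply/(P1 _ (sub0mx _ _)) => y _; exact: dotv0l.
move=> a u v Hu Hv.
have Hc : ((a *: u + v)%R <= dualcode C)%MS.
  by apply: addmx_sub; [apply: scalemx_sub; exact: Hd Hu | exact: Hd Hv].
apply/(P1 _ Hc) => y Hy.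
rewrite dotvD (proj1 (P1 _ (Hd _ Hu)) Hu y Hy) (proj1 (P1 _ (Hd _ Hv)) Hv y Hy).
by rewrite mulr0 addr0.
Qed.
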